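(* Let $G=S_\infty$, let $M\subseteq S(G)$ be a minimal subflow and $\alpha\in M$. The following are equivalent: (1) $\alpha$ is an idempotent; (2) for every $<\,\in\mathrm{LO}(\omega)$, $(<,<^\alpha)\in A^M$; (3) there is $<\,\in\mathrm{LO}(\omega)$ with $(<,<^\alpha)\in A^M$.
   Context: View $S_\infty$ as the automorphism group of $\omega$ in the empty language, $\mathbf{A}_n=\{0,\dots,n-1\}$, $H_n$ the injections $n\to\omega$. $S(G)$ is the inverse limit of the spaces $\beta H_n$ along continuous extensions of restriction maps, $\alpha(n)$ the $n$-th coordinate, with right action $S\in(\alpha g)(m)$ iff $\{x\in H_n:x\circ g|_m\in S\}\in\alpha(n)$ (for $n$ large); $G$ is dense in $S(G)$. For $f\in H_m$, $\alpha\cdot f=(\alpha g)(m)$ for any $g$ extending $f$; product: $S\in(\alpha\gamma)(m)$ iff $\{f\in H_m:S\in\alpha\cdot f\}\in\gamma(m)$; idempotent means $\alpha\alpha=\alpha$. A minimal subflow is a nonempty closed $G$-invariant set with no proper such subset. $\mathrm{LO}(\omega)$ is the space of linear orders on $\omega$ (a closed subspace of $2^{H_2}$) with right action $a\,(<\cdot g)\,b\iff g(a)<g(b)$; for $\alpha\in S(G)$, $<^\alpha=<\cdot\alpha=\lim_{g_i\to\alpha}<\cdot g_i$ ($g_i\in G$). $\mathcal{F}^M_2=\{T\subseteq H_2:T\in\beta(2)\ \forall\beta\in M\}$; $\phi:H_2\to[\omega]^2$ forgets order and $\phi(\mathcal{F})=\{T:\phi^{-1}(T)\in\mathcal{F}\}$.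 $A(<_0,<_1)=\{\{a,b\}\in[\omega]^2:(a<_0b\iff a<_1b)\}$; $A^M=\{(<_0,<_1):A(<_0,<_1)\in\phi(\mathcal{F}^M_2)\}$. *)

(* Defs.v *)
From mathcomp Require Import all_boot.
From mathcomp Require Import boolp classical_sets.
Set Implicit Arguments. Unset Strict Implicit. Unset Printing Implicit Defensive.
Local Open Scope classical_set_scope.

(* H_n : injections n -> omega, encoded as duplicate-free sequences of
   naturals of length n (x i = nth 0 x i).  Subsets of H_n are sets of
   sequences; only their trace on H_n matters. *)
Definition Hn (n : nat) : set (seq nat) := [set s | uniq s /\ size s = n].

Definition restr (m : nat) (x : seq nat) : seq nat := take m x.

Definition compH (x f : seq nat) : seq nat := map (nth 0 x) f.

(* U is an ultrafilter on the set A (subsets taken up to trace on A):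
   an element of beta A. *)
Definition ultra_on {T : Type} (A : set T) (U : set (set T)) : Prop :=
  [/\ U A, ~ U set0,
      (forall S S', U S -> U S' -> U (S `&` S')),
      (forall S S', U S -> S `&` A `<=` S' -> U S')
    & (forall S, U S \/ U (~` S))].

Definition SGpt := nat -> set (set (seq nat)).

(* S(G) = inverse limit of the beta H_n along the extended restrictions *)
Definition is_SG (a : SGpt) : Prop :=
  (forall n, ultra_on (Hn n) (a n)) /\
  (forall m n, m <= n -> forall S,
      a m S <-> a n [set x | S (restr m x)]).

Definition inG (g : nat -> nat) : Prop := bijective g.

Definition gres (g : nat -> nat) (m : nat) : seq nat := map g (iota 0 m).

(* right action: S in (a g)(m) iff {x in H_n : x o g|_m in S} in a(n), n large *)
Definition act (a : SGpt) (g : nat -> nat) : SGpt :=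
  fun m S => exists N, forall n, N <= n ->
    a n [set x | Hn n x /\ S (compH x (gres g m))].

Definition dotf (a : SGpt) (f : seq nat) : set (set (seq nat)) :=
  fun S => exists N, forall n, N <= n ->
    a n [set x | Hn n x /\ S (compH x f)].

Definition mulSG (a c : SGpt) : SGpt :=
  fun m S => c m [set f | Hn m f /\ dotf a f S].

Definition idempotentSG (a : SGpt) : Prop :=
  forall m S, mulSG a a m S <-> a m S.

(* Topology of S(G): basic open sets {b | S in b(n)}.  A subset M of S(G)
   is closed iff every point of S(G) outside M has a basic neighbourhood
   disjoint from M. *)
Definition closedSG (M : set SGpt) : Prop :=
  forall a, is_SG a -> ~ M a ->
    exists n S, a n S /\ forall b, M b -> ~ b n S.

Definition G_invariant (M : set SGpt) : Prop :=
  forall a g, M a -> inG g -> M (act a g).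

Definition subflow (M : set SGpt) : Prop :=
  [/\ M `<=` is_SG, M !=set0, closedSG M & G_invariant M].

Definition minimal_subflow (M : set SGpt) : Prop :=
  subflow M /\ forall N, subflow N -> N `<=` M -> N = M.

Definition LO (R : nat -> nat -> Prop) : Prop :=
  [/\ (forall a, ~ R a a),
      (forall a b c, R a b -> R b c -> R a c)
    & (forall a b, a <> b -> R a b \/ R b a)].

(* <^alpha = < . alpha = lim_{g_i -> alpha} < . g_i, where
   a (< . g) b iff g a < g b.  Evaluated at the pair (a,b) this limit is
   determined by whether {x in H_n : x a < x b} belongs to alpha(n). *)
Definition order_act (R : nat -> nat -> Prop) (a : SGpt) : nat -> nat -> Prop :=
  fun i j => exists N, forall n, N <= n ->
    a n [set x | Hn n x /\ R (nth 0 x i) (nth 0 x j)].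

Definition FM2 (M : set SGpt) : set (set (seq nat)) :=
  [set T | forall b, M b -> b 2 T].

(* [omega]^2, encoding {a,b} as the pair (min, max) *)
Definition omega2 : set (nat * nat) := [set p | p.1 < p.2].

Definition phi (x : seq nat) : nat * nat :=
  (minn (nth 0 x 0) (nth 0 x 1), maxn (nth 0 x 0) (nth 0 x 1)).

Definition phiF (F : set (set (seq nat))) : set (set (nat * nat)) :=
  [set T | F (phi @^-1` T)].

Definition Aset (R0 R1 : nat -> nat -> Prop) : set (nat * nat) :=
  [set p | omega2 p /\ (R0 p.1 p.2 <-> R1 p.1 p.2)].

Definition AM (M : set SGpt) (R0 R1 : nat -> nat -> Prop) : Prop :=
  phiF (FM2 M) (Aset R0 R1).

(* Main.v *)
Require Import Defs.
From mathcomp Require Import all_boot.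
From mathcomp Require Import boolp classical_sets.
From mathcomp Require Import filter.
From Stdlib Require ClassicalEpsilon.
Set Implicit Arguments. Unset Strict Implicit. Unset Printing Implicit Defensive.
Local Open Scope classical_set_scope.

Lemma nth_compH x f i : i < size f -> nth 0 (compH x f) i = nth 0 x (nth 0 f i).
Proof. by move=> hi; rewrite /compH (nth_map 0). Qed.

Lemma size_compH x f : size (compH x f) = size f.
Proof. by rewrite size_map. Qed.

Lemma compH_assoc x f h : all (fun i => i < size f) h ->
  compH (compH x f) h = compH x (compH f h).
Proof.
move=> /allP hh; rewrite /compH -map_comp; apply/eq_in_map => i /hh hi /=.
by rewrite (nth_map 0).
Qed.

Lemma compH_take N x f : all (fun i => i < N) f -> compH (take N x) f = compH x f.
Proof.
by move=> /allP hf; rewrite /compH; apply/eq_in_map => i /hf hi; rewrite nth_take.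
Qed.

Lemma uniq_compH x f : uniq x -> uniq f -> all (fun i => i < size x) f ->
  uniq (compH x f).
Proof.
move=> ux uf /allP hf; rewrite /compH map_inj_in_uniq // => i j /hf hi /hf hj.
by move/eqP; rewrite nth_uniq // => /eqP.
Qed.

Lemma compH_iota x : compH x (iota 0 (size x)) = x.
Proof. by rewrite /compH map_nth_iota0 // take_size. Qed.

Definition bnd (s : seq nat) : nat := (foldr maxn 0 s).+1.

Lemma bndP s i : i \in s -> i < bnd s.
Proof.
elim: s => //= a s IH; rewrite inE => /orP [/eqP ->|/IH h].
  by rewrite ltnS leq_maxl.
by apply: (leq_trans h); rewrite ltnS leq_maxr.
Qed.

Lemma all_bnd s : all (fun i => i < bnd s) s.
Proof. by apply/allP => i /bndP. Qed.

Section Ultra.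
Variables (T : Type) (A : set T) (U : set (set T)).
Hypothesis hU : ultra_on A U.

Lemma uA : U A. Proof. by case: hU. Qed.
Lemma u0 : ~ U set0. Proof. by case: hU. Qed.
Lemma uI S S' : U S -> U S' -> U (S `&` S'). Proof. by case: hU => _ _ h _ _; apply: h. Qed.
Lemma uS S S' : U S -> S `&` A `<=` S' -> U S'. Proof. by case: hU => _ _ _ h _; apply: h. Qed.
Lemma uC S : U S \/ U (~` S). Proof. by case: hU. Qed.
Lemma uN S : ~ U S -> U (~` S). Proof. by case: (uC S). Qed.
Lemma uNN S : U S -> U (~` S) -> False.
Proof. move=> h1 h2; apply: u0; apply: uS (uI h1 h2) _ => x [[]] //. Qed.
Lemma utr S S' : (forall x, A x -> S x -> S' x) -> U S -> U S'.
Proof. by move=> h hS; apply: uS hS _ => x [Sx Ax]; apply: h. Qed.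
Lemma utrE S S' : (forall x, A x -> (S x <-> S' x)) -> U S <-> U S'.
Proof. by move=> h; split; apply: utr => x /h []. Qed.
Lemma uex S : U S -> exists x, A x /\ S x.
Proof.
move=> hS; apply: contrapT => hn; apply: u0; apply: uS hS _ => x [Sx Ax].
by apply: hn; exists x.
Qed.
End Ultra.

Definition ev (a : SGpt) (E : seq nat -> Prop) : Prop :=
  exists N, forall n, N <= n -> a n [set x | Hn n x /\ E x].

Definition loc (N0 : nat) (E : seq nat -> Prop) : Prop :=
  forall x, N0 <= size x -> (E x <-> E (take N0 x)).

Lemma Hn_take n m x : Hn n x -> m <= n -> Hn m (take m x).
Proof.
move=> [ux sx] mn; split; first exact: take_uniq.
by rewrite size_take sx; case: ltngtP mn => // ->.
Qed.

Section Ev.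
Variable a : SGpt.
Hypothesis ha : is_SG a.

Lemma SG_u n : ultra_on (Hn n) (a n). Proof. by case: ha. Qed.
Lemma SG_coh m n S : m <= n -> a m S <-> a n [set x | S (restr m x)].
Proof. by case: ha => _ h /h. Qed.

Lemma ev_loc N0 E : loc N0 E -> (ev a E <-> a N0 E).
Proof.
move=> hl.
have key : forall n, N0 <= n -> a n [set x | Hn n x /\ E x] <-> a N0 E.
  move=> n hn; rewrite (SG_coh E hn); apply: (utrE (SG_u n)) => x hx.
  have sx : N0 <= size x by case: hx => _ ->.
  rewrite /restr /mkset -(hl x sx); tauto.
split; first by move=> [N hN]; apply/(key (maxn N N0)); [exact: leq_maxr|
  apply: hN; exact: leq_maxl].
by move=> h; exists N0 => n hn; apply/key.
Qed.

Lemma ev_mono E E' : (forall x, uniq x -> E x -> E' x) -> ev a E -> ev a E'.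
Proof.
move=> h [N hN]; exists N => n /hN; apply: (utr (SG_u n)) => x hx [hx' Ex].
by split => //; apply: h => //; case: hx.
Qed.

Lemma ev_ext E E' : (exists N0, forall x, N0 <= size x -> uniq x -> (E x <-> E' x)) ->
  (ev a E <-> ev a E').
Proof.
move=> [N0 h]; split => -[N hN]; exists (maxn N N0) => n hn;
  (have /hN : N <= n by apply: leq_trans hn; exact: leq_maxl);
  apply: (utr (SG_u n)) => x [ux sx] [_ Ex]; split => //;
  (have s0 : N0 <= size x by rewrite sx; apply: leq_trans hn; exact: leq_maxr);
  by [rewrite -h | rewrite h].
Qed.

Lemma ev_and E E' : ev a E -> ev a E' -> ev a (fun x => E x /\ E' x).
Proof.
move=> [N hN] [N' hN']; exists (maxn N N') => n hn.
have h1 : N <= n by apply: leq_trans hn; exact: leq_maxl.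
have h2 : N' <= n by apply: leq_trans hn; exact: leq_maxr.
by apply: (utr (SG_u n)) (uI (SG_u n) (hN n h1) (hN' n h2)) => x _ [[? ?] [_ ?]].
Qed.

Lemma ev_ex E : ev a E -> forall N, exists x, uniq x /\ N <= size x /\ E x.
Proof.
move=> [N0 h] N; have [x [[ux sx] [_ Ex]]] := uex (SG_u _) (h (maxn N0 N) (leq_maxl _ _)).
by exists x; rewrite sx leq_maxr.
Qed.

Lemma ev_false : ~ ev a (fun _ => False).
Proof. by move=> /ev_ex /(_ 0) [x [_ [_ []]]]. Qed.

Lemma ev_em N0 E : loc N0 E -> ev a E \/ ev a (fun x => ~ E x).
Proof.
move=> hl; have hl' : loc N0 (fun x => ~ E x).
  by move=> x /hl h; rewrite h.
rewrite (ev_loc hl) (ev_loc hl'); case: (uC (SG_u N0) E) => [|h]; [by left|right].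
exact: h.
Qed.

Lemma ev_not N0 E : loc N0 E -> ~ ev a E -> ev a (fun x => ~ E x).
Proof. by move=> /ev_em []. Qed.

Lemma ev_all (I : eqType) (L : seq I) (E : I -> seq nat -> Prop) :
  (forall i, i \in L -> ev a (E i)) -> ev a (fun x => forall i, i \in L -> E i x).
Proof.
elim: L => [|i L IH] h.
  by exists 0 => n _; apply: (utr (SG_u n)) (uA (SG_u n)) => x hx.
have := ev_and (h i (mem_head _ _)) (IH (fun j hj => h j (@mem_behead _ (i :: L) _ hj))).
by apply: ev_mono => x _ [h1 h2] j; rewrite inE => /orP [/eqP ->|/h2].
Qed.

End Ev.

Lemma loc_compH N0 (S : set (seq nat)) f : all (fun i => i < N0) f ->
  loc N0 (fun x => S (compH x f)).
Proof. by move=> hf x _; rewrite compH_take. Qed.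

Lemma loc_nth N0 (R : nat -> nat -> Prop) i j : i < N0 -> j < N0 ->
  loc N0 (fun x => R (nth 0 x i) (nth 0 x j)).
Proof. by move=> hi hj x _; rewrite !nth_take. Qed.

Lemma loc_mono N0 N1 E : N0 <= N1 -> loc N0 E -> loc N1 E.
Proof.
move=> h01 hl x hx.
have s1 : N0 <= size (take N1 x) by rewrite size_takel.
rewrite (hl x (leq_trans h01 hx)) (hl _ s1) take_takel //.
Qed.

Lemma ext_inG f : uniq f -> exists g, inG g /\ gres g (size f) = f.
Proof.
move=> uf.
pose K := maxn (size f) (bnd f).
pose l := f ++ [seq k <- iota 0 K | k \notin f].
have ul : uniq l.
  rewrite cat_uniq uf filter_uniq ?iota_uniq // andbT.
  by apply/hasPn => k; rewrite mem_filter => /andP [].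
have sub1 : {subset l <= iota 0 K}.
  move=> k; rewrite mem_cat mem_filter => /orP [kf|/andP [] //].
  by rewrite mem_iota /= (leq_trans (bndP kf)) // leq_maxr.
have sub2 : {subset iota 0 K <= l}.
  move=> k kK; rewrite mem_cat mem_filter kK andbT; exact: orbN.
have sl : size l = K.
  apply/eqP; rewrite eqn_leq; apply/andP; split.
    by rewrite -(size_iota 0 K); apply: uniq_leq_size.
  by rewrite -{1}(size_iota 0 K); apply: uniq_leq_size; rewrite ?iota_uniq.
pose g i := if i < K then nth 0 l i else i.
pose h k := if k < K then index k l else k.
have lK : forall i, i < K -> nth 0 l i < K.
  by move=> i iK; have := sub1 (nth 0 l i); rewrite mem_iota /= => ->//; rewrite mem_nth ?sl.
exists g; split.
  exists h => [i|k]; rewrite /g /h.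
    have [iK|iK] := boolP (i < K); last by rewrite (negbTE iK).
    by rewrite (lK _ iK) index_uniq ?sl.
  have [kK|kK] := boolP (k < K); last by rewrite (negbTE kK).
  have kl : k \in l by apply: sub2; rewrite mem_iota.
  by rewrite -{1}sl index_mem kl nth_index.
have fK : size f <= K by exact: leq_maxl.
suff -> : gres g (size f) = take (size f) l by rewrite take_size_cat.
rewrite /gres -(map_nth_iota0 0) ?sl //; apply/eq_in_map => i; rewrite mem_iota /= => hi.
by rewrite /g (leq_trans hi fK).
Qed.

Lemma ev_mono_sz a E E' : is_SG a ->
  (exists N0, forall x, N0 <= size x -> uniq x -> E x -> E' x) -> ev a E -> ev a E'.
Proof.
move=> ha [N0 h] [N hN]; exists (maxn N N0) => n hn.
have /hN : N <= n by apply: leq_trans hn; exact: leq_maxl.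
apply: (utr (SG_u ha n)) => x [ux sx] [_ Ex]; split => //; apply: h => //.
by rewrite sx; apply: leq_trans hn; exact: leq_maxr.
Qed.

Lemma evn_ext b (P : nat -> seq nat -> Prop) Q : is_SG b ->
  (exists N0, forall n f, N0 <= n -> Hn n f -> (P n f <-> Q f)) ->
  ((exists N, forall n, N <= n -> b n [set f | Hn n f /\ P n f]) <-> ev b Q).
Proof.
move=> hb [N0 h]; split => -[N hN]; exists (maxn N N0) => n hn;
  (have /hN : N <= n by apply: leq_trans hn; exact: leq_maxl);
  apply: (utr (SG_u hb n)) => x hx [_ Ex]; split => //;
  (have s0 : N0 <= n by apply: leq_trans hn; exact: leq_maxr);
  by [rewrite -(h n x s0 hx) | rewrite (h n x s0 hx)].
Qed.

Lemma nth_neq x i j : uniq x -> i < size x -> j < size x -> i <> j ->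
  nth 0 x i <> nth 0 x j.
Proof. by move=> ux hi hj hij /eqP; rewrite nth_uniq // => /eqP. Qed.

Definition linr (R : nat -> nat -> Prop) :=
  forall u v, u <> v -> (R u v \/ R v u) /\ ~ (R u v /\ R v u).

Lemma LO_linr R : LO R -> linr R.
Proof.
move=> [irr tr tot] u v uv; split; first exact: tot.
by move=> [h1 h2]; apply: (irr u); apply: tr h1 h2.
Qed.

Section OA.
Variables (R : nat -> nat -> Prop) (a : SGpt).
Hypotheses (hR : LO R) (ha : is_SG a).

Lemma oa_irr i : ~ order_act R a i i.
Proof.
move=> h; apply: (ev_false ha); apply: (ev_mono ha) h => x _; case: hR => irr _ _.
exact: irr.
Qed.

Lemma oa_linr : linr (order_act R a).
Proof.
move=> i j ij; split.
  have hl : loc (maxn i j).+1 (fun x => R (nth 0 x i) (nth 0 x j)).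
    by apply: loc_nth; rewrite ltnS ?leq_maxl ?leq_maxr.
  case: (ev_em ha hl) => h; [by left|right].
  apply: (ev_mono_sz ha) h; exists (maxn i j).+1 => x sx ux hn.
  have hi : i < size x by apply: leq_trans sx; rewrite ltnS leq_maxl.
  have hj : j < size x by apply: leq_trans sx; rewrite ltnS leq_maxr.
  by case: hR => _ _ tot; case: (tot _ _ (nth_neq ux hi hj ij)).
move=> [h1 h2]; apply: (ev_false ha); apply: (ev_mono ha) (ev_and ha h1 h2) => x _ [].
by case: hR => irr tr _ r1 r2; apply: (irr (nth 0 x i)); apply: tr r1 r2.
Qed.
End OA.

Lemma phi_A (R R' : nat -> nat -> Prop) y : linr R -> linr R' -> Hn 2 y ->
  ((phi @^-1` Aset R R') y <-> (R (nth 0 y 0) (nth 0 y 1) <-> R' (nth 0 y 0) (nth 0 y 1))).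
Proof.
move=> lR lR' [uy sy].
have ne : nth 0 y 0 <> nth 0 y 1 by apply: nth_neq => //; rewrite sy.
rewrite /preimage /Aset /phi /omega2 /=.
move: ne; set u := nth 0 y 0; set v := nth 0 y 1 => ne.
have [uv|vu|e] := ltngtP u v; last by [].
  by split; [case|split].
have [o1 n1] := lR _ _ ne; have [o2 n2] := lR' _ _ ne; tauto.
Qed.

Lemma all_lt_bnd s N : bnd s <= N -> all (fun i => i < N) s.
Proof. by move=> h; apply/allP => i /bndP /leq_trans; apply. Qed.

Lemma uniq_gres g m : inG g -> uniq (gres g m).
Proof. by move=> /bij_inj gi; rewrite map_inj_uniq ?iota_uniq. Qed.

Lemma size_gres g m : size (gres g m) = m.
Proof. by rewrite size_map size_iota. Qed.

Lemma Hn_compH n x f : uniq x -> bnd f <= size x -> Hn n f -> Hn n (compH x f).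
Proof.
move=> ux sx [uf sf]; split; last by rewrite size_compH.
by apply: uniq_compH => //; apply: all_lt_bnd.
Qed.

Lemma act_mul al b g : is_SG al -> is_SG b -> inG g ->
  (forall m S, mulSG al b m S <-> b m S) ->
  forall m S, mulSG al (act b g) m S <-> act b g m S.
Proof.
move=> hal hb hg hbb m S; set gm := gres g m.
have ugm : uniq gm by apply: uniq_gres.
have sgm : size gm = m by apply: size_gres.
rewrite /mulSG.
change (ev b (fun x => [set f | Hn m f /\ dotf al f S] (compH x gm)) <->
        ev b (fun x => S (compH x gm))).
transitivity (ev b (fun x => dotf al (compH x gm) S)).
  apply: (ev_ext hb); exists (bnd gm) => x sx ux; rewrite /mkset; split => [[]|] // h.
  by split => //; apply: Hn_compH.
transitivity (exists N, forall n, N <= n ->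
   b n [set f | Hn n f /\ dotf al f [set x | Hn n x /\ S (compH x gm)]]); last first.
  by split => -[N hN]; exists N => n /hN h; [apply/(hbb n) | apply/(hbb n)].
symmetry; apply: (@evn_ext b (fun n f => dotf al f [set x | Hn n x /\ S (compH x gm)]) (fun f => dotf al (compH f gm) S) hb); exists (bnd gm) => n f hn hf.
apply: (ev_ext hal); exists (bnd f) => z sz uz; rewrite /mkset.
have [uf sf] := hf.
rewrite compH_assoc ?sf ?all_lt_bnd //; split => [[]|] // h; split => //.
exact: Hn_compH.
Qed.

Section PartA.
Variables (M : set SGpt) (al : SGpt).
Hypotheses (hM : minimal_subflow M) (hal : M al).

Lemma M_SG b : M b -> is_SG b.
Proof. by case: hM => -[h _ _ _] _ /h. Qed.
Lemma M_closed : closedSG M. Proof. by case: hM => -[]. Qed.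
Lemma M_inv : G_invariant M. Proof. by case: hM => -[]. Qed.
Lemma M_min N : subflow N -> N `<=` M -> N = M. Proof. by case: hM => _; apply. Qed.

Lemma leftid : idempotentSG al -> forall b, M b -> forall m S, mulSG al b m S <-> b m S.
Proof.
move=> hid.
pose N := [set b | M b /\ forall m S, mulSG al b m S <-> b m S].
suff e : N = M.
  by move=> b Mb; have [] : N b by rewrite e.
apply: M_min => [|b []//]; split.
- by move=> b [/M_SG].
- by exists al.
- move=> b hb nNb; have [Mb|nMb] := pselect (M b); last first.
    have [n [S [bS hS]]] := M_closed hb nMb.
    by exists n, S; split => // c [Mc _]; apply: hS.
  have [m [S hmS]] : exists m S, ~ (mulSG al b m S <-> b m S).
    apply: contrapT => hn; apply: nNb; split => // m S.
    by apply: contrapT => h; apply: hn; exists m, S.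
  have hbm := SG_u hb m.
  have [mS|nmS] := pselect (mulSG al b m S).
    have nbS : ~ b m S by move=> h; apply: hmS; split => _.
    exists m, ([set f | Hn m f /\ dotf al f S] `&` ~` S); split.
      by apply: (uI hbm) => //; apply: (uN hbm).
    move=> c [Mc hc] h; have hcm := SG_u (M_SG Mc) m.
    have cS : c m S.
      by rewrite -hc; apply: (uS hcm) h _ => x [[h1 _] _].
    by apply: (uNN hcm) cS _; apply: (uS hcm) h _ => x [[_ h2] _].
  have bS : b m S by apply: contrapT => h; apply: hmS; split => [/nmS|/h].
  exists m, (S `&` ~` [set f | Hn m f /\ dotf al f S]); split.
    by apply: (uI hbm) => //; apply: (uN hbm).
  move=> c [Mc hc] h; have hcm := SG_u (M_SG Mc) m.
  have cS : c m S by apply: (uS hcm) h _ => x [[h1 _] _].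
  move: cS; rewrite -hc => cS; apply: (uNN hcm) cS _.
  by apply: (uS hcm) h _ => x [[_ h2] _].
- move=> b g [Mb hb] hg; split; first exact: M_inv.
  apply: act_mul => //; [exact: M_SG|exact: M_SG].
Qed.

Lemma partA12 R : idempotentSG al -> LO R -> AM M R (order_act R al).
Proof.
move=> hid hR b Mb; have hb := M_SG Mb; have ha := M_SG hal.
have hb2 := SG_u hb 2.
pose Q := [set y : seq nat | R (nth 0 y 0) (nth 0 y 1)].
pose Q' := [set y : seq nat | order_act R al (nth 0 y 0) (nth 0 y 1)].
have QQ : b 2 Q <-> b 2 Q'.
  rewrite -(leftid hid Mb) /mulSG; apply: (utrE hb2) => y hy; rewrite /mkset.
  have [uy sy] := hy.
  have -> : dotf al y Q <-> order_act R al (nth 0 y 0) (nth 0 y 1).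
    rewrite /dotf /order_act; apply: (ev_ext ha); exists (bnd y) => x sx ux.
    by rewrite /Q /mkset !nth_compH ?sy.
  tauto.
have lR := LO_linr hR; have lR' := oa_linr hR ha.
rewrite /AM /phiF /FM2 /mkset.
have [bQ|nbQ] := pselect (b 2 Q).
  have bQ' : b 2 Q' by rewrite -QQ.
  apply: (uS hb2) (uI hb2 bQ bQ') _ => y [[q q'] hy].
  by rewrite (phi_A lR lR' hy); split.
have nbQ' : ~ b 2 Q' by rewrite -QQ.
apply: (uS hb2) (uI hb2 (uN hb2 nbQ) (uN hb2 nbQ')) _ => y [[q q'] hy].
by rewrite (phi_A lR lR' hy); split.
Qed.
End PartA.

Definition infin (B : set nat) := forall n, exists b, B b /\ n <= b.
Definition homog m (c : seq nat -> bool) (B : set nat) (v : bool) :=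
  forall I, sorted ltn I -> size I = m -> (forall i, i \in I -> B i) -> c I = v.

Lemma strict_mono (f : nat -> nat) : (forall k, f k < f k.+1) ->
  forall k k', k < k' -> f k < f k'.
Proof.
move=> h k; elim=> // k' IH; rewrite ltnS leq_eqVlt => /orP [/eqP ->|/IH]//.
by move=> /ltn_trans; apply.
Qed.

Lemma ramsey m : forall c A, infin A -> exists B v, B `<=` A /\ infin B /\ homog m c B v.
Proof.
elim: m => [|m IH] c A hA.
  exists A, (c [::]); split => //; split => // I _; by case: I.
pose inh : inhabited (set nat * bool) := inhabits (set0, true).
pose pa (A' : set nat) := ClassicalEpsilon.epsilon (inhabits 0) A'.
pose Pn (A' : set nat) (p : set nat * bool) :=
  p.1 `<=` [set x | A' x /\ pa A' < x] /\ infin p.1 /\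
  homog m (fun I => c (pa A' :: I)) p.1 p.2.
pose nx (A' : set nat) := ClassicalEpsilon.epsilon inh (Pn A').
have nxP : forall A', infin A' -> A' (pa A') /\ Pn A' (nx A').
  move=> A' hA'; split.
    apply: ClassicalEpsilon.epsilon_spec; have [b [? _]] := hA' 0; by exists b.
  apply: ClassicalEpsilon.epsilon_spec.
  have hA'' : infin [set x | A' x /\ pa A' < x].
    move=> n; have [b [Ab hb]] := hA' (maxn n (pa A')).+1.
    exists b; split; first split => //.
      by apply: leq_trans hb; rewrite ltnS leq_maxr.
    by apply: leq_trans hb; rewrite ltnW // ltnS leq_maxl.
  have [B [v [h1 [h2 h3]]]] := IH (fun I => c (pa A' :: I)) _ hA''.
  by exists (B, v).
pose As := fix As k := if k is k'.+1 then (nx (As k')).1 else A.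
pose ak k := pa (As k).
pose cols k := (nx (As k)).2.
have Ainf : forall k, infin (As k).
  by elim=> // k IHk; have [_ [_ [h _]]] := nxP _ IHk.
have Astep : forall k, As k.+1 `<=` [set x | As k x /\ ak k < x].
  by move=> k; have [_ [h _]] := nxP _ (Ainf k).
have Ahom : forall k, homog m (fun I => c (ak k :: I)) (As k.+1) (cols k).
  by move=> k; have [_ [_ [_ h]]] := nxP _ (Ainf k).
have akA : forall k, As k (ak k) by move=> k; have [h _] := nxP _ (Ainf k).
have Adec : forall k k', k <= k' -> As k' `<=` As k.
  move=> k k' /subnK <-; elim: (k' - k) => [|d IHd] //= x /Astep [/IHd].
  by [].
have akinc : forall k, ak k < ak k.+1 by move=> k; have [_] := Astep _ _ (akA k.+1).
have akmono := strict_mono akinc.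
have akge : forall k, k <= ak k.
  elim=> // k IHk; exact: leq_ltn_trans IHk (akinc k).
pose v := `[< forall N, exists k, N <= k /\ cols k = true >].
have vinf : forall N, exists k, N <= k /\ cols k = v.
  rewrite /v; case: asboolP => [h //|h] N.
  have [N0 hN0] : exists N0, forall k, N0 <= k -> cols k = false.
    apply: contrapT => hn; apply: h => N'; apply: contrapT => hn'; apply: hn.
    exists N' => k hk; apply: contrapT => ck; apply: hn'; exists k; split => //.
    by move: ck; case: (cols k).
  exists (maxn N N0); rewrite leq_maxl; split => //; apply: hN0; exact: leq_maxr.
exists [set x | exists k, x = ak k /\ cols k = v], v; split.
  by move=> x [k [-> _]]; apply: (Adec 0 k).
split.
  move=> n; have [k [nk ck]] := vinf n; exists (ak k); split; first by exists k.
  exact: leq_trans nk (akge k).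
move=> [|i0 I] //= sI [sz] hB.
have [k [ei0 ck]] := hB i0 (mem_head _ _); rewrite ei0 in sI *.
rewrite -ck; apply: (Ahom k) => //; first exact: path_sorted sI.
move=> x xI; have := order_path_min ltn_trans sI => /allP /(_ x xI) hx.
have [k' [ex _]] : exists k', x = ak k' /\ cols k' = v.
  by apply: hB; rewrite inE xI orbT.
have kk' : k < k'.
  rewrite ltnNge; apply/negP => hk; move: hx; rewrite ex.
  move: hk; rewrite leq_eqVlt => /orP [/eqP ->|/akmono h]; first by rewrite ltnn.
  by rewrite ltnNge ltnW.
rewrite ex; apply: (Adec k.+1 k' kk'); exact: akA.
Qed.

Lemma ramsey2 m c1 c2 : exists B, infin B /\ exists v1 v2, homog m c1 B v1 /\ homog m c2 B v2.
Proof.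
have hT : infin setT by move=> n; exists n.
have [B1 [v1 [_ [i1 h1]]]] := ramsey m c1 hT.
have [B2 [v2 [s2 [i2 h2]]]] := ramsey m c2 i1.
exists B2; split => //; exists v1, v2; split => // I sI sz hI.
by apply: h1 => // i /hI /s2.
Qed.

Lemma enum_inf B : infin B -> exists e : nat -> nat, (forall k, B (e k)) /\ (forall k, e k < e k.+1).
Proof.
move=> hB.
pose e := fix e k := if k is k'.+1 then
   ClassicalEpsilon.epsilon (inhabits 0) (fun x => B x /\ e k' < x)
   else ClassicalEpsilon.epsilon (inhabits 0) B.
have he : forall k, B (e k.+1) /\ e k < e k.+1.
  move=> k; apply: (ClassicalEpsilon.epsilon_spec (inhabits 0) (fun x => B x /\ e k < x)).
  by have [b [Bb hb]] := hB (e k).+1; exists b.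
exists e; split; last by move=> k; case: (he k).
case=> [|k]; last by case: (he k).
apply: ClassicalEpsilon.epsilon_spec; have [b [Bb _]] := hB 0; by exists b.
Qed.

Lemma sorted_map_iota (e : nat -> nat) a n : (forall k, e k < e k.+1) ->
  sorted ltn (map e (iota a n)).
Proof.
move=> he; rewrite sorted_map; apply: (sub_sorted _ (iota_ltn_sorted a n)).
by move=> i j; apply: strict_mono.
Qed.

Fixpoint tuples (m K : nat) : seq (seq nat) :=
  if m is m'.+1 then [seq a :: t | a <- iota 0 K, t <- tuples m' K] else [:: [::]].

Lemma tuplesP m K f : size f = m -> all (fun i => i < K) f -> f \in tuples m K.
Proof.
elim: m f => [|m IH] [|a f] //= [sf] /andP [aK hf].
by apply: allpairs_f; [rewrite mem_iota | apply: IH].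
Qed.

Lemma count_le (T : eqType) (p q : pred T) (s : seq T) :
  (forall l, l \in s -> p l -> q l) -> count p s <= count q s.
Proof.
elim: s => //= z s IH h.
have hz : p z -> q z := h z (mem_head z s).
rewrite leq_add //; last by apply: IH => l ls; apply: h; rewrite inE ls orbT.
by case: (p z) hz => // /(_ isT) ->.
Qed.

Lemma count_lt (T : eqType) (p q : pred T) (s : seq T) y :
  (forall l, l \in s -> p l -> q l) -> y \in s -> q y -> ~~ p y ->
  count p s < count q s.
Proof.
elim: s => // z s IH hpq; rewrite inE => /orP [/eqP ->|ys] qy npy /=.
  rewrite (negbTE npy) qy add0n add1n ltnS; apply: count_le => l ls.
  by apply: hpq; rewrite inE ls orbT.
have hz : p z -> q z := hpq z (mem_head z s).
rewrite -addnS leq_add //; last first.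
  by apply: IH => // l ls; apply: hpq; rewrite inE ls orbT.
by case: (p z) hz => // /(_ isT) ->.
Qed.

Lemma uq (R p : nat -> nat -> Prop) m x J1 J2 :
  LO R -> uniq x -> perm_eq J1 J2 -> size J1 = m -> all (fun i => i < size x) J1 ->
  (forall k i, k < m -> i < m -> (R (nth 0 x (nth 0 J1 k)) (nth 0 x (nth 0 J1 i)) <-> p k i)) ->
  (forall k i, k < m -> i < m -> (R (nth 0 x (nth 0 J2 k)) (nth 0 x (nth 0 J2 i)) <-> p k i)) ->
  J1 = J2.
Proof.
move=> hR ux pJ sJ1 aJ h1 h2.
have sJ2 : size J2 = m by rewrite -(perm_size pJ).
apply: (eq_from_nth (x0:=0)); first by rewrite sJ1 sJ2.
move=> i; rewrite sJ1 => im.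
set a := nth 0 J1 i; set b := nth 0 J2 i.
pose cnt y := count (fun l => `[< R (nth 0 x l) (nth 0 x y) >]) J1.
have cJ : forall J, size J = m ->
    (forall k, k < m -> (R (nth 0 x (nth 0 J k)) (nth 0 x (nth 0 J i)) <-> p k i)) ->
    count (fun l => `[< R (nth 0 x l) (nth 0 x (nth 0 J i)) >]) J =
    count (fun k => `[< p k i >]) (iota 0 m).
  move=> J sJ hJ.
  have eJ : map (nth 0 J) (iota 0 m) = J by rewrite map_nth_iota0 ?sJ // -sJ take_size.
  rewrite -[X in count _ X = _]eJ count_map.
  apply: eq_in_count => k; rewrite mem_iota /= => km.
  by apply: asbool_equiv_eq; apply: hJ.
have ca : cnt a = cnt b.
  rewrite /cnt (cJ J1) //; last by move=> k km; apply: h1.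
  by rewrite (permP pJ) (cJ J2) // => k km; apply: h2.
have aJ1 : a \in J1 by rewrite mem_nth ?sJ1.
have bJ1 : b \in J1 by rewrite (perm_mem pJ) mem_nth ?sJ2.
have [//|/eqP ab] := eqVneq a b.
have hxa : nth 0 x a <> nth 0 x b.
  by apply: nth_neq => //; move/allP: aJ => aJ; apply: aJ.
case: hR => irr tr tot.
case: (tot _ _ hxa) => hr.
- have : cnt a < cnt b.
    apply: (count_lt (y := a)) => //.
    + by move=> l _ /asboolP hl; apply/asboolP; apply: tr hl hr.
    + exact/asboolP.
    + by apply/negP => /asboolP; apply: irr.
  by rewrite ca ltnn.
- have : cnt b < cnt a.
    apply: (count_lt (y := b)) => //.
    + by move=> l _ /asboolP hl; apply/asboolP; apply: tr hl hr.
    + exact/asboolP.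
    + by apply/negP => /asboolP; apply: irr.
  by rewrite ca ltnn.
Qed.

Lemma nonprinc_ultra : exists U : set (set nat),
  [/\ (forall N, U [set n | (N <= n)%N]), ~ U set0,
      (forall A B, U A -> U B -> U (A `&` B)),
      (forall A B, A `<=` B -> U A -> U B)
    & (forall A, U A \/ U (~` A))].
Proof.
have [G [UG sub]] := ultraFilterLemma (eventually_filter).
exists G; split.
- move=> N; apply: sub; exists N => //.
- exact: filter_not_empty.
- by move=> A B; apply: filterI.
- by move=> A B AB; apply: filterS.
- by move=> A; apply: in_ultra_setVsetC.
Qed.

Lemma cpt M (dK : nat -> SGpt) : minimal_subflow M -> (forall K, M (dK K)) ->
  exists d, M d /\ forall n S, (exists K0, forall K, K0 <= K -> dK K n S) -> d n S.
Proof.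
move=> hM hd.
have [U [Ucof U0 UI US UC]] := nonprinc_ultra.
have hdK : forall K, is_SG (dK K) by move=> K; apply: (M_SG hM).
have Uev : forall A, (exists K0, forall K, K0 <= K -> A K) -> U A.
  by move=> A [K0 h]; apply: US (Ucof K0) => K /h.
have Une : forall A, U A -> exists K, A K.
  move=> A UA; apply: contrapT => hn; apply: U0; apply: US UA => K AK.
  by apply: hn; exists K.
pose d : SGpt := fun n S => U [set K | dK K n S].
have hdS : is_SG d.
  split.
    move=> n; split.
    - by apply: Uev; exists 0 => K _; apply: uA (SG_u (hdK K) n).
    - by move=> /Une [K]; apply: (u0 (SG_u (hdK K) n)).
    - move=> S S' h h'; apply: US (UI _ _ h h') => K [].
      exact: (uI (SG_u (hdK K) n)).
    - move=> S S' h hs; apply: US h => K hK; exact: (uS (SG_u (hdK K) n) hK hs).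
    - move=> S; case: (UC [set K | dK K n S]) => h; [by left|right].
      by apply: US h => K hK; apply: (uN (SG_u (hdK K) n) hK).
  move=> m n mn S; rewrite /d; split; apply: US => K; rewrite /mkset;
    by rewrite (SG_coh (hdK K) S mn).
exists d; split; last by move=> n S /Uev.
apply: contrapT => nMd.
have [n [S [dS hS]]] := M_closed hM hdS nMd.
by have [K hK] := Une _ dS; apply: (hS (dK K)).
Qed.

Lemma ev_true a : is_SG a -> ev a (fun _ => True).
Proof. by move=> ha; exists 0 => n _; apply: (utr (SG_u ha n)) (uA (SG_u ha n)). Qed.

Definition pairs n : seq (nat * nat) := [seq (i, j) | i <- iota 0 n, j <- iota 0 n].

Lemma pairsP n ij : ij \in pairs n -> ij.1 < n /\ ij.2 < n.
Proof. by case/allpairsP => -[i j] [/=]; rewrite !mem_iota /= => hi hj ->. Qed.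

Lemma pairs_in n i j : i < n -> j < n -> (i, j) \in pairs n.
Proof. by move=> hi hj; apply: allpairs_f; rewrite mem_iota. Qed.

Lemma ev_pat R a f : LO R -> is_SG a ->
  ev a (fun z => forall i j, i < size f -> j < size f ->
    (R (nth 0 (compH z f) i) (nth 0 (compH z f) j) <->
     order_act R a (nth 0 f i) (nth 0 f j))).
Proof.
move=> hR ha.
have := ev_all ha (L := pairs (size f)) (E := fun ij z =>
   R (nth 0 (compH z f) ij.1) (nth 0 (compH z f) ij.2) <->
   order_act R a (nth 0 f ij.1) (nth 0 f ij.2)).
case.
  move=> [i j] /pairsP [/= hi hj].
  pose Ez z := R (nth 0 (compH z f) i) (nth 0 (compH z f) j).
  have oaeq : order_act R a (nth 0 f i) (nth 0 f j) <-> ev a Ez.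
    apply: (ev_ext ha); exists 0 => z _ _; by rewrite /Ez !nth_compH.
  have hl : loc (bnd f) Ez.
    exact: (@loc_compH (bnd f) (fun y => R (nth 0 y i) (nth 0 y j)) f (all_bnd f)).
  case: (ev_em ha hl) => h.
    have o : order_act R a (nth 0 f i) (nth 0 f j) by rewrite oaeq.
    by apply: (ev_mono ha) h => z _ hz; split.
  have no : ~ order_act R a (nth 0 f i) (nth 0 f j).
    rewrite oaeq => h'; apply: (ev_false ha).
    by apply: (ev_mono ha) (ev_and ha h h') => z _ [].
  by apply: (ev_mono ha) h => z _ hz; split.
move=> N hN; exists N => n /hN; apply: (utr (SG_u ha n)) => z _ [hz H]; split => //.
by move=> i j hi hj; apply: (H (i, j)); apply: pairs_in.
Qed.

Lemma uniq_sorted_ltn s : sorted ltn s -> uniq s.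
Proof. by apply: sorted_uniq; [exact: ltn_trans | exact: ltnn]. Qed.

Section ML.
Variables (M : set SGpt) (al : SGpt) (R : nat -> nat -> Prop) (m : nat)
  (T T' : set (seq nat)).
Hypotheses (hM : minimal_subflow M) (hal : M al) (hR : LO R)
  (hTT : forall x, T x -> T' x -> False)
  (hpair : forall i j, ev al (fun f => order_act R al (nth 0 f i) (nth 0 f j)) <->
                        order_act R al i j)
  (h1 : mulSG al al m T) (h2 : al m T').

Let ha : is_SG al := M_SG hM hal.

Definition pat x := forall i j, i < m -> j < m ->
  (R (nth 0 x i) (nth 0 x j) <-> order_act R al i j).
Definition P := [set x | Hn m x /\ pat x].
Definition S1 := T `&` P.
Definition S2 := T' `&` P.

Lemma alP : al m P.
Proof.
have H0 := ev_pat (iota 0 m) hR ha.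
have H1 : ev al (fun z => pat (compH z (iota 0 m))).
  apply: (ev_mono ha) H0 => z _ H i j hi hj; have := H i j; rewrite size_iota !nth_iota //.
  by move=> /(_ hi hj).
have hall : all (fun i => i < m) (iota 0 m) by apply/allP => i; rewrite mem_iota.
have h := (ev_loc ha (@loc_compH m pat _ hall)).1 H1.
apply: (utr (SG_u ha m)) h => z [uz sz] hz; split => //.
by move: hz; rewrite -sz compH_iota.
Qed.
Lemma pair_ev i j :
  ev al (fun f => order_act R al (nth 0 f i) (nth 0 f j) <-> order_act R al i j).
Proof.
have hl : loc (maxn i j).+1 (fun f => order_act R al (nth 0 f i) (nth 0 f j)).
  by apply: loc_nth; rewrite ltnS ?leq_maxl ?leq_maxr.
case: (ev_em ha hl) => h.
  have o := (hpair i j).1 h.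
  by apply: (ev_mono ha) h => f _ hf; split.
have no : ~ order_act R al i j.
  move/(hpair i j).2 => h'; apply: (ev_false ha).
  by apply: (ev_mono ha) (ev_and ha h h') => f _ [].
by apply: (ev_mono ha) h => f _ hf; split.
Qed.

Lemma alalP : al m [set f | Hn m f /\ dotf al f P].
Proof.
pose Q := fun f => forall ij, ij \in pairs m ->
  (order_act R al (nth 0 f ij.1) (nth 0 f ij.2) <-> order_act R al ij.1 ij.2).
have H1 : ev al Q.
  exact: (ev_all ha (L := pairs m) (E := fun ij f => order_act R al (nth 0 f ij.1) (nth 0 f ij.2) <-> order_act R al ij.1 ij.2) (fun ij _ => pair_ev ij.1 ij.2)).
have hl : loc m Q.
  move=> x sx; split => h ij hij; have [hi hj] := pairsP hij.
    by rewrite !nth_take //; apply: h.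
  by have := h ij hij; rewrite !nth_take.
have h := (ev_loc ha hl).1 H1.
apply: (utr (SG_u ha m)) h => f [uf sf] hQ; split => //.
change (ev al (fun x => P (compH x f))).
apply: (ev_mono_sz ha _ (ev_pat f hR ha)); exists (bnd f) => z sz uz H.
split; first exact: Hn_compH.
move=> i j hi hj; rewrite (H i j) ?sf //; exact: (hQ (i, j) (pairs_in hi hj)).
Qed.

Lemma h1S : mulSG al al m S1.
Proof.
apply: (utr (SG_u ha m)) (uI (SG_u ha m) h1 alalP) => f _ [[hf d1] [_ d2]].
split => //; apply: (ev_mono ha) (ev_and ha d1 d2) => z _ [].
by move=> ? ?; split.
Qed.

Lemma h2S : al m S2.
Proof. exact: (uI (SG_u ha m) h2 alP). Qed.

Definition Mono (S : set (seq nat)) K := [set x | forall f, uniq f -> size f = m ->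
  all (fun i => i < K) f -> ~ S (compH x f)].

Lemma mono_sub S K K' x : K <= K' -> Mono S K' x -> Mono S K (take K x).
Proof.
move=> KK' h f uf sf af; rewrite compH_take //; apply: h => //.
by apply/allP => i /(allP af) /leq_trans; apply.
Qed.

Lemma mono_down d S K K' : is_SG d -> K <= K' -> d K' (Mono S K') -> d K (Mono S K).
Proof.
move=> hd KK' h; apply/(SG_coh hd _ KK'); apply: (utr (SG_u hd K')) h => x _.
exact: mono_sub.
Qed.

Lemma mono_down2 d S S' K K' : is_SG d -> K <= K' ->
  d K' (Mono S K' `|` Mono S' K') -> d K (Mono S K `|` Mono S' K).
Proof.
move=> hd KK' h; apply/(SG_coh hd _ KK'); apply: (utr (SG_u hd K')) h => x _ [h|h].
  by left; apply: mono_sub h.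
by right; apply: mono_sub h.
Qed.

Definition Z S := [set d | M d /\ forall K, d K (Mono S K)].

Lemma Z_full S : Z S !=set0 -> Z S = M.
Proof.
move=> ne; apply: (M_min hM); last by move=> d [].
split => //.
- by move=> d [/(M_SG hM)].
- move=> d hd nZ; case: (pselect (M d)) => [Md|nMd]; last first.
    have [n [S' [dS hS]]] := M_closed hM hd nMd.
    by exists n, S'; split => // b [Mb _]; apply: hS.
  have [K nK] : exists K, ~ d K (Mono S K).
    apply: contrapT => hn; apply: nZ; split => // K; apply: contrapT => h.
    by apply: hn; exists K.
  exists K, (~` Mono S K); split; first exact: (uN (SG_u hd K)).
  by move=> b [Mb hb] hbK; apply: (uNN (SG_u (M_SG hM Mb) K) (hb K) hbK).
- move=> d g [Md hd] hg; split; first exact: (M_inv hM).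
  move=> K; set gm := gres g K.
  change (ev d (fun x => Mono S K (compH x gm))).
  exists (bnd gm) => n hn; apply: (utr (SG_u (M_SG hM Md) n)) (hd n) => x [ux sx] hx.
  split => // f uf sf af; rewrite compH_assoc ?size_gres //; apply: hx.
  + by apply: uniq_compH => //; [exact: uniq_gres | rewrite size_gres].
  + by rewrite size_compH.
  + apply/allP => y /mapP [k kf ->]; apply: leq_trans hn; apply: bndP.
    by apply: mem_nth; rewrite size_gres; apply: (allP af).
Qed.

Lemma rstep K : exists d, M d /\ d K (Mono S1 K `|` Mono S2 K).
Proof.
have [d0 Md0] : M !=set0 by case: hM => -[_ h _ _] _.
have hd0 := M_SG hM Md0.
pose EI (S : set (seq nat)) (I : seq nat) := fun x => exists J : seq nat, [/\ uniq J, size J = m, {subset J <= I} & S (compH x J)].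
have locEI : forall S I, loc (bnd I) (EI S I).
  move=> S I x sx; split => -[J [uJ sJ sub SJ]]; exists J;
  (have aJ : all (fun i => i < bnd I) J by apply/allP => i /sub /bndP);
  split => //; by [rewrite compH_take | rewrite compH_take in SJ].
pose c S I := `[< ev d0 (EI S I) >].
have [B [iB [v1 [v2 [hom1 hom2]]]]] := ramsey2 m (c S1) (c S2).
have [e [eB einc]] := enum_inf iB.
pose h := map e (iota 0 K).
have sh : size h = K by rewrite size_map size_iota.
have uh : uniq h by apply: uniq_sorted_ltn; apply: sorted_map_iota.
have hB : forall y, y \in h -> B y by move=> y /mapP [k _ ->].
have key : forall S v, homog m (c S) B v -> v = false ->
    ev d0 (fun x => Mono S K (compH x h)).
  move=> S v hom v0.
  have H : ev d0 (fun x => forall f, f \in tuples m K -> uniq f -> size f = m ->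
      all (fun i => i < K) f -> ~ S (compH x (compH h f))).
    apply: (ev_all hd0) => f _.
    case: (pselect (uniq f /\ size f = m /\ all (fun i => i < K) f)) =>
      [[uf [sf af]]|nf]; last first.
      apply: (ev_mono hd0) (ev_true hd0) => x _ _ uf sf af.
      by exfalso; apply: nf.
    set J := compH h f; set I := sort leq J.
    have uJ : uniq J by apply: uniq_compH => //; rewrite sh.
    have nev : ~ ev d0 (EI S I).
      move=> hev; have : c S I = v.
        apply: hom.
        - by rewrite ltn_sorted_uniq_leq sort_uniq uJ (sort_sorted leq_total).
        - by rewrite size_sort size_compH.
        - move=> i; rewrite mem_sort => /mapP [k kf ->]; apply: hB.
          by apply: mem_nth; rewrite sh; exact: (allP af).
      by rewrite v0 /c (asboolT hev).
    apply: (ev_mono hd0) (ev_not hd0 (locEI S I) nev) => x _ hx _ _ _ SJ.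
    apply: hx; exists J; split => //; first by rewrite size_compH.
    by move=> y; rewrite mem_sort.
  apply: (ev_mono hd0) H => x _ H f uf sf af.
  rewrite compH_assoc ?sh //; apply: (H f) => //; exact: tuplesP.
have [g [hg eg]] := ext_inG uh.
have eg' : gres g K = h by rewrite -sh.
case: v1 hom1 => hom1; last first.
  exists (act d0 g); split; first exact: (M_inv hM).
  change (ev d0 (fun x => (Mono S1 K `|` Mono S2 K) (compH x (gres g K)))).
  rewrite eg'; apply: (ev_mono hd0) (key S1 false hom1 erefl) => x _ hx; by left.
case: v2 hom2 => hom2; last first.
  exists (act d0 g); split; first exact: (M_inv hM).
  change (ev d0 (fun x => (Mono S1 K `|` Mono S2 K) (compH x (gres g K)))).
  rewrite eg'; apply: (ev_mono hd0) (key S2 false hom2 erefl) => x _ hx; by right.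
exfalso.
pose I0 := map e (iota 0 m).
have sI0 : size I0 = m by rewrite size_map size_iota.
have cI : forall S, homog m (c S) B true -> ev d0 (EI S I0).
  move=> S hom; apply/asboolP; apply: hom.
  - exact: sorted_map_iota.
  - exact: sI0.
  - by move=> y /mapP [k _ ->].
have [x [ux [sx [[J1 [uJ1 sJ1 sub1 SJ1]] [J2 [uJ2 sJ2 sub2 SJ2]]]]]] :=
  ev_ex hd0 (ev_and hd0 (cI S1 hom1) (cI S2 hom2)) (bnd I0).
have e1 : J1 =i I0 by apply: (uniq_min_size uJ1 sub1 _).2; rewrite sJ1 sI0.
have e2 : J2 =i I0 by apply: (uniq_min_size uJ2 sub2 _).2; rewrite sJ2 sI0.
have pJ : perm_eq J1 J2 by apply: uniq_perm => // y; rewrite e1 e2.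
have aJ1 : all (fun i => i < size x) J1.
  by apply/allP => i /sub1 /bndP /leq_trans; apply.
case: SJ1 => t1 [_ hp1]; case: SJ2 => t2 [_ hp2].
have eJ : J1 = J2.
  apply: (uq (p := order_act R al) hR ux pJ sJ1 aJ1).
  - by move=> k i hk hi; have := hp1 k i hk hi; rewrite !nth_compH ?sJ1.
  - by move=> k i hk hi; have := hp2 k i hk hi; rewrite !nth_compH ?sJ2.
by rewrite -eJ in t2; apply: hTT t1 t2.
Qed.

Lemma ML_false : False.
Proof.
have [dK hdK] := choice rstep.
have [ds [Mds hds]] := cpt hM (fun K => (hdK K).1).
have hdsS := M_SG hM Mds.
have U : forall K, ds K (Mono S1 K `|` Mono S2 K).
  move=> K; apply: hds; exists K => K' KK'.
  by apply: (mono_down2 (M_SG hM (hdK K').1) KK'); exact: (hdK K').2.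
case: (pselect (forall K, ds K (Mono S1 K))) => [all1|nall1].
  have eZ : Z S1 = M by apply: Z_full; exists ds.
  have : Z S1 al by rewrite eZ.
  case=> _ hZ.
  have [f [_ [[uf sf] df]]] := uex (SG_u ha m) h1S.
  have hev : ev al (fun z => Mono S1 (size z) z).
    exists 0 => n _; apply: (utr (SG_u ha n)) (hZ n) => z [uz sz] hz; split => //.
    by rewrite sz.
  have [z [uz [sz [Sz Mz]]]] := ev_ex ha (ev_and ha df hev) (bnd f).
  by apply: (Mz f uf sf) => //; apply: all_lt_bnd.
have [K0 nK0] : exists K0, ~ ds K0 (Mono S1 K0).
  apply: contrapT => hn; apply: nall1 => K; apply: contrapT => h'.
  by apply: hn; exists K.
have all2 : forall K, ds K (Mono S2 K).
  move=> K; apply: (mono_down hdsS (leq_maxl K K0)).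
  set K' := maxn K K0.
  have n1 : ~ ds K' (Mono S1 K').
    by move=> h; apply: nK0; apply: (mono_down hdsS (leq_maxr K K0)) h.
  apply: (uS (SG_u hdsS K')) (uI (SG_u hdsS K') (U K') (uN (SG_u hdsS K') n1)) _.
  by move=> x [[[h|h] nh] _].
have eZ : Z S2 = M by apply: Z_full; exists ds.
have : Z S2 al by rewrite eZ.
case=> _ hZ.
have [x [[ux sx] [Mx Sx]]] := uex (SG_u ha m) (uI (SG_u ha m) (hZ m) h2S).
apply: (Mx (iota 0 m)) => //; [exact: iota_uniq | by rewrite size_iota |
  by apply/allP => i; rewrite mem_iota | by rewrite -sx compH_iota].
Qed.

End ML.

Lemma hpair_of_AM M al R : minimal_subflow M -> M al -> LO R ->
  AM M R (order_act R al) ->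
  forall i j, ev al (fun f => order_act R al (nth 0 f i) (nth 0 f j)) <-> order_act R al i j.
Proof.
move=> hM hal hR hA i j; have ha := M_SG hM hal.
have [<-|ij] := eqVneq i j.
  split => h; exfalso; last exact: (oa_irr hR ha h).
  apply: (ev_false ha); apply: (ev_mono ha) h => f _; exact: (oa_irr hR ha).
have u2 : uniq [:: i; j] by rewrite /= inE andbT.
have [g [hg eg]] := ext_inG u2.
rewrite /= in eg.
have Mb : M (act al g) := M_inv hM hal hg.
have hb := hA _ Mb.
have H2 : Hn 2 [:: i; j] by [].
have hE : ev al (fun x => R (nth 0 x i) (nth 0 x j) <->
                          order_act R al (nth 0 x i) (nth 0 x j)).
  move: hb.
  change (ev al (fun x => (phi @^-1` Aset R (order_act R al)) (compH x (gres g 2))) -> 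
          ev al (fun x => R (nth 0 x i) (nth 0 x j) <->
                          order_act R al (nth 0 x i) (nth 0 x j))).
  rewrite eg; apply: (ev_mono_sz ha); exists (bnd [:: i; j]) => x sx ux.
  by rewrite (phi_A (LO_linr hR) (oa_linr hR ha) (Hn_compH ux sx H2)) !nth_compH.
split => h.
  have h' : ev al (fun x => R (nth 0 x i) (nth 0 x j)).
    by apply: (ev_mono ha) (ev_and ha h hE) => x _ [h1 h2]; apply/h2.
  exact: h'.
have h' : ev al (fun x => R (nth 0 x i) (nth 0 x j)) := h.
by apply: (ev_mono ha) (ev_and ha h' hE) => x _ [h1 h2]; apply/h2.
Qed.

Theorem mainTheorem18 (M : set SGpt) (a : SGpt) :
  minimal_subflow M -> M a ->
  [<-> idempotentSG a;
       (forall R, LO R -> AM M R (order_act R a));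
       (exists R, LO R /\ AM M R (order_act R a))].
Proof.
move=> hM ha; have hLO : LO (fun u v => u < v).
  split; [by move=> u; rewrite ltnn | by move=> u v w; apply: ltn_trans |].
  by move=> u v /eqP; case: ltngtP => // _ _; [left|right].
tfae.
- by move=> hid R hR; apply: partA12.
- by move=> h; exists (fun u v => u < v); split => //; apply: h.
- move=> [R [hR hA]] m S.
  have hp := hpair_of_AM hM ha hR hA.
  have hS := M_SG hM ha.
  apply: contrapT => hn.
  case: (pselect (mulSG a a m S)) => hm.
    have nS : ~ a m S by move=> h; apply: hn; split.
    apply: (@ML_false M a R m S (~` S) hM ha hR _ hp hm (uN (SG_u hS m) nS)).
    by move=> x h1 h2; apply: h2.
  have aS : a m S by apply: contrapT => h; apply: hn; split => // /hm.
  have hmC : mulSG a a m (~` S).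
    have := uN (SG_u hS m) hm.
    apply: (utr (SG_u hS m)) => f hf nd; split => //.
    apply: (ev_not hS (@loc_compH (bnd f) S f (all_bnd f))) => hd; apply: nd; split => //.
  apply: (@ML_false M a R m (~` S) S hM ha hR _ hp hmC aS).
  by move=> x h1 h2; apply: h1.
Qed.
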